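(* Assume that the exact relative presentation $X_\infty$ satisfies a linear isoperimetric inequality of factor $K$. If $s\in S$ represents an element $a\in H_i$, then $\|a\|\le 12K$, i.e. the word length of $a$ with respect to $S_i$ is at most $12K$.
   Context: Setting. $G=\langle S\mid\mathcal R\rangle$ is a finite presentation with $S$ finite symmetric and relators of length 2 or 3. $H_1,\dots,H_n\le G$, and $S_i\subset S$ is a finite symmetric generating set of $H_i$. $X_\infty$ has generating set $\hat S=S\sqcup H_1\sqcup\dots\sqcup H_n$ (every element of every $H_i$ is a letter) and relators: - the words of $\mathcal R$; - the words $\tilde s^{-1}s$ for $s\in S_i$, where $\tilde s$ is the letter of $H_i$ corresponding to $s$; - for each $i$, all words of at most 3 letters of $H_i$ whose product is trivial in $H_i$. $X_\infty$ satisfies a linear isoperimetric inequality of factor $K$ if every word $w$ over $\hat S$ trivial in $G$ has a Van Kampen diagram over $X_\infty$ with at most $K\,\mathrm{length}(w)$ 2-cells. For $a\in H_i$, the complexity $\|a\|$ is the word length of $a$ with respect to $S_i$. *)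

(* Defs.v *)
From Stdlib Require Import Relations.
From Stdlib Require List.
From mathcomp Require Import all_boot all_order all_algebra.
Set Implicit Arguments. Unset Strict Implicit. Unset Printing Implicit Defensive.

Definition is_group (G : Type) (mul : G -> G -> G) (one : G) (inv : G -> G) :=
  [/\ (forall x y z, mul x (mul y z) = mul (mul x y) z),
      (forall x, mul one x = x), (forall x, mul x one = x),
      (forall x, mul (inv x) x = one) & (forall x, mul x (inv x) = one)].

Definition is_subgroup (G : Type) (mul : G -> G -> G) (one : G) (inv : G -> G)
  (H : G -> Prop) :=
  [/\ H one, (forall x y, H x -> H y -> H (mul x y)) & (forall x, H x -> H (inv x))].

Definition gprod (G : Type) (mul : G -> G -> G) (one : G) (l : seq G) : G :=
  foldr mul one l.

(* (x, true) is the letter x, (x, false) is its formal inverse x^{-1}. *)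
Definition sinv (A : Type) (x : A * bool) : A * bool := (x.1, ~~ x.2).
Definition winv (A : Type) (w : seq (A * bool)) : seq (A * bool) :=
  rev (map (@sinv A) w).
Definition posw (A : Type) (w : seq A) : seq (A * bool) := map (fun x => (x, true)) w.

Inductive free_step (A : Type) : seq (A * bool) -> seq (A * bool) -> Prop :=
  | FreeStep (u v : seq (A * bool)) (x : A * bool) :
      free_step (u ++ x :: sinv x :: v) (u ++ v).

Definition freeq (A : Type) : relation (seq (A * bool)) :=
  clos_refl_sym_trans _ (@free_step A).

Definition weval (A G : Type) (mul : G -> G -> G) (one : G) (inv : G -> G)
  (f : A -> G) (w : seq (A * bool)) : G :=
  foldr (fun x acc => mul (if x.2 then f x.1 else inv (f x.1)) acc) one w.

Definition conj_prod (A : Type)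
  (cs : seq (seq (A * bool) * seq (A * bool) * bool)) : seq (A * bool) :=
  flatten [seq c.1.1 ++ (if c.2 then c.1.2 else winv c.1.2) ++ winv c.1.1 | c <- cs].

(* [area_le valid Rel w N]: w is, in the free group over the (valid) letters,
   a product of at most N conjugates of relators (from Rel) or their inverses;
   by van Kampen's lemma this is the same as the existence of a van Kampen
   diagram for w over the presentation with at most N 2-cells. *)
Definition area_le (A : Type) (valid : A -> Prop) (Rel : seq (A * bool) -> Prop)
  (w : seq (A * bool)) (N : nat) : Prop :=
  exists cs : seq (seq (A * bool) * seq (A * bool) * bool),
    [/\ size cs <= N,
        List.Forall (fun c => Rel c.1.2 /\ List.Forall (fun x => valid x.1) c.1.1) cs
      & freeq w (conj_prod cs)].

(* letters of \hat S = S \sqcup H_1 \sqcup ... \sqcup H_n ;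
   [LH i a] is the letter of H_i corresponding to a (valid only if a \in H_i) *)
Inductive letter (S G : Type) (n : nat) : Type :=
  | LS of S
  | LH of 'I_n & G.
Arguments LS {S G n}.
Arguments LH {S G n}.

Section Xinf.
Variables (G : Type) (mul : G -> G -> G) (one : G) (inv : G -> G).
Variables (S : finType) (ev : S -> G) (R : seq (seq S)) (n : nat)
          (H : 'I_n -> G -> Prop) (Si : 'I_n -> {set S}).

Definition valid_letter (x : letter S G n) : Prop :=
  match x with LS _ => True | LH i a => H i a end.

Definition letter_val (x : letter S G n) : G :=
  match x with LS s => ev s | LH _ a => a end.

Definition Xinf_rel (r : seq (letter S G n * bool)) : Prop :=
  [\/ exists2 r0, r0 \in R & r = posw [seq LS s | s <- r0],
      exists i s, s \in Si i /\ r = [:: (LH i (ev s), false); (LS s, true)]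
    | exists i (l : seq G), [/\ List.Forall (H i) l, size l <= 3,
                               gprod mul one l = one & r = posw [seq LH i a | a <- l]]].

Definition Xinf_linear_isoperimetric (R' : realFieldType) (K : R') : Prop :=
  forall w : seq (letter S G n),
    List.Forall valid_letter w ->
    weval mul one inv letter_val (posw w) = one ->
    exists N : nat, (N%:R <= K * (size w)%:R)%R /\
                    area_le valid_letter Xinf_rel (posw w) N.
End Xinf.

(* Main.v *)
Require Import Defs.
From mathcomp Require Import all_boot all_order all_algebra zify.
From Stdlib Require Import Relations ClassicalEpsilon.
Import Order.TTheory GRing.Theory Num.Theory.

Module Helpers.
Set Implicit Arguments. Unset Strict Implicit.

Definition stp (G A : Type) (mul : G -> G -> G) (inv : G -> G) (f : A -> G)
  (g : G) (x : A * bool) : G :=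
  if x.2 then mul g (f x.1) else mul g (inv (f x.1)).

Fixpoint Lam (G A : Type) (mul : G -> G -> G) (inv : G -> G) (f : A -> G)
  (hw : A -> bool) (phi : G -> int) (g : G) (W : seq (A * bool)) : int :=
  match W with
  | [::] => 0%R
  | x :: W' => ((if hw x.1 then phi (stp mul inv f g x) - phi g else 0)
                + Lam mul inv f hw phi (stp mul inv f g x) W')%R
  end.

Definition endp (G A : Type) (mul : G -> G -> G) (inv : G -> G) (f : A -> G)
  (g : G) (W : seq (A * bool)) : G := foldl (stp mul inv f) g W.

Lemma Lam_cat G A mul inv f hw phi (g : G) (U V : seq (A * bool)) :
  Lam mul inv f hw phi g (U ++ V) =
  (Lam mul inv f hw phi g U + Lam mul inv f hw phi (endp mul inv f g U) V)%R.
Proof.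
elim: U g => [|x U IH] g /=; first by rewrite add0r.
by rewrite IH addrA.
Qed.

Lemma endp_cat G A mul inv f (g : G) (U V : seq (A * bool)) :
  endp mul inv f g (U ++ V) = endp mul inv f (endp mul inv f g U) V.
Proof. by rewrite /endp foldl_cat. Qed.

Lemma endp_weval G A mul one inv f (g : G) (W : seq (A * bool)) :
  is_group mul one inv ->
  endp mul inv f g W = mul g (weval mul one inv f W).
Proof.
case=> hA h1l h1r hVl hVr.
elim: W g => [|x W IH] g /=; first by rewrite /endp /= h1r.
rewrite /endp /= -/(endp _ _ _ _ _) IH /stp; case: x.2; by rewrite hA.
Qed.

Lemma stp_sinv G A mul one inv f (g : G) (x : A * bool) :
  is_group mul one inv -> stp mul inv f (stp mul inv f g x) (sinv x) = g.
Proof.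
case=> hA h1l h1r hVl hVr.
rewrite /stp /sinv /=; case: x.2 => /=; by rewrite -hA ?hVr ?hVl h1r.
Qed.

Lemma Lam_free G A mul one inv f hw phi (g : G) (W1 W2 : seq (A * bool)) :
  is_group mul one inv -> free_step W1 W2 ->
  Lam mul inv f hw phi g W1 = Lam mul inv f hw phi g W2.
Proof.
move=> hG [u v x].
rewrite !Lam_cat; congr (_ + _)%R.
rewrite /= (stp_sinv _ _ _ hG) /sinv /=.
case: (hw x.1); rewrite ?add0r //.
lia.
Qed.

Lemma Lam_freeq G A mul one inv f hw phi (g : G) (W1 W2 : seq (A * bool)) :
  is_group mul one inv -> freeq W1 W2 ->
  Lam mul inv f hw phi g W1 = Lam mul inv f hw phi g W2.
Proof.
move=> hG; elim => [x y H|x|x y _ ->|x y z _ -> _ ->] //.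
exact: (Lam_free f hw phi g hG H).
Qed.

Lemma winv_cons (A : Type) (x : A * bool) u : winv (x :: u) = winv u ++ [:: sinv x].
Proof. by rewrite /winv /= rev_cons cats1. Qed.

Lemma Lam_winv G A mul one inv f hw phi (g : G) (u : seq (A * bool)) :
  is_group mul one inv ->
  endp mul inv f (endp mul inv f g u) (winv u) = g /\
  Lam mul inv f hw phi (endp mul inv f g u) (winv u) = (- Lam mul inv f hw phi g u)%R.
Proof.
move=> hG; elim: u g => [|x u IH] g; first by rewrite /winv /= oppr0.
rewrite winv_cons endp_cat Lam_cat.
have -> : endp mul inv f g (x :: u) = endp mul inv f (stp mul inv f g x) u by [].
case: (IH (stp mul inv f g x)) => -> ->.
rewrite /endp /= (stp_sinv _ _ _ hG); split => //.
rewrite /sinv /=; case: (hw x.1); lia.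
Qed.

Lemma block_prop G A mul one inv f hw phi (g : G) (u r : seq (A * bool)) :
  is_group mul one inv -> (forall h, endp mul inv f h r = h) ->
  endp mul inv f g (u ++ r ++ winv u) = g /\
  Lam mul inv f hw phi g (u ++ r ++ winv u) = Lam mul inv f hw phi (endp mul inv f g u) r.
Proof.
move=> hG hr.
have [e1 e2] := Lam_winv f hw phi g u hG.
rewrite !endp_cat !Lam_cat hr e1 e2; split => //.
rewrite addrCA addrA addrK. by [].
Qed.

Lemma conj_bound G A mul one inv f hw phi (Rel : seq (A * bool) -> Prop)
  (cs : seq (seq (A * bool) * seq (A * bool) * bool)) :
  is_group mul one inv ->
  (forall r, Rel r -> forall h : G, endp mul inv f h r = h) ->
  (forall r, Rel r -> forall h : G,
      (-1 <= Lam mul inv f hw phi h r)%R /\ (Lam mul inv f hw phi h r <= 1)%R) ->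
  List.Forall (fun c => Rel c.1.2) cs ->
  forall g : G, (- (size cs)%:Z <= Lam mul inv f hw phi g (conj_prod cs))%R /\
                (Lam mul inv f hw phi g (conj_prod cs) <= (size cs)%:Z)%R.
Proof.
move=> hG hE hL; elim: cs => [|c cs IH] Hf g; first by rewrite /=; lia.
inversion Hf as [|c' cs' Hc Hcs]; subst.
have hEc := hE _ Hc.
have -> : conj_prod (c :: cs) =
  (c.1.1 ++ (if c.2 then c.1.2 else winv c.1.2) ++ winv c.1.1) ++ conj_prod cs by [].
have hr' : forall h, endp mul inv f h (if c.2 then c.1.2 else winv c.1.2) = h.
  move=> h; case: c.2; first exact: hEc.
  by have [e1 _] := Lam_winv f hw phi h c.1.2 hG; rewrite hEc in e1.
have [e1 e2] := block_prop hw phi g c.1.1 hG hr'.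
rewrite Lam_cat e1 e2.
have [i1 i2] := IH Hcs g.
have [j1 j2] : (-1 <= Lam mul inv f hw phi (endp mul inv f g c.1.1)
                    (if c.2 then c.1.2 else winv c.1.2))%R /\
               (Lam mul inv f hw phi (endp mul inv f g c.1.1)
                    (if c.2 then c.1.2 else winv c.1.2) <= 1)%R.
  set h := endp mul inv f g c.1.1.
  case: c.2; first exact: hL.
  have [_ e] := Lam_winv f hw phi h c.1.2 hG; rewrite hEc in e; rewrite e.
  have [k1 k2] := hL _ Hc h; lia.
rewrite /=; lia.
Qed.

Lemma Lam_allH G A mul inv f hw phi (g : G) (W : seq (A * bool)) :
  all (fun x => hw x.1) W ->
  Lam mul inv f hw phi g W = (phi (endp mul inv f g W) - phi g)%R.
Proof.
elim: W g => [|x W IH] g /=; first by rewrite subrr.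
case/andP => -> /IH ->; rewrite /endp /=; lia.
Qed.

Lemma Lam_noH G A mul inv f hw phi (g : G) (W : seq (A * bool)) :
  all (fun x => ~~ hw x.1) W -> Lam mul inv f hw phi g W = 0%R.
Proof.
elim: W g => [|x W IH] g //=.
case/andP => /negbTE -> /IH ->; by rewrite addr0.
Qed.

Definition Pw (G : Type) (S : finType) (mul : G -> G -> G) (one : G) (ev : S -> G)
  (T : {set S}) (k : nat) (g : G) : Prop :=
  exists l : seq S, [/\ size l = k, all (fun t => t \in T) l & gprod mul one (map ev l) = g].

Definition pb (P : Prop) : bool := if excluded_middle_informative P then true else false.

Lemma pbP (P : Prop) : pb P = true <-> P.
Proof. by rewrite /pb; case: excluded_middle_informative. Qed.

Definition phiw (G : Type) (S : finType) (mul : G -> G -> G) (one : G) (ev : S -> G)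
  (T : {set S}) (B : nat) (g : G) : nat :=
  find (fun k => pb (Pw mul one ev T k g)) (iota 0 B).

Lemma gprod_cat G mul one inv (l1 l2 : seq G) :
  is_group mul one inv -> gprod mul one (l1 ++ l2) = mul (gprod mul one l1) (gprod mul one l2).
Proof.
case=> hA h1l _ _ _; elim: l1 => [|x l IH] /=; first by rewrite h1l.
by rewrite IH hA.
Qed.

Lemma phiw_spec G (S : finType) mul one (ev : S -> G) T B g :
  phiw mul one ev T B g < B -> Pw mul one ev T (phiw mul one ev T B g) g.
Proof.
move=> hlt.
have hs : phiw mul one ev T B g < size (iota 0 B) by rewrite size_iota.
move: (hs); rewrite /phiw -has_find => /(nth_find 0).
by rewrite nth_iota ?add0n // => /pbP.
Qed.

Lemma phiw_le G (S : finType) mul one (ev : S -> G) T B g k :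
  k < B -> Pw mul one ev T k g -> phiw mul one ev T B g <= k.
Proof.
move=> hk hP; rewrite leqNgt; apply/negP => hlt.
have := before_find 0 hlt; rewrite nth_iota ?add0n //.
by move: hP => /pbP ->.
Qed.

Lemma phiw_up G (S : finType) mul one inv (ev : S -> G) (T : {set S}) B g t :
  is_group mul one inv -> t \in T ->
  phiw mul one ev T B (mul g (ev t)) <= (phiw mul one ev T B g).+1.
Proof.
move=> hG ht.
have hsz : forall h, phiw mul one ev T B h <= B.
  by move=> h; rewrite /phiw; apply: leq_trans (find_size _ _) _; rewrite size_iota.
case: (ltnP (phiw mul one ev T B g) B) => hlt; last first.
  by apply: leq_trans (hsz _) _; apply: leq_trans hlt _.
case: (ltnP (phiw mul one ev T B g).+1 B) => hlt2; last first.
  exact: leq_trans (hsz _) hlt2.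
apply: phiw_le => //.
have [l [hl1 hl2 hl3]] := phiw_spec hlt.
exists (l ++ [:: t]); split.
- by rewrite size_cat hl1 addn1.
- by rewrite all_cat hl2 /= ht.
- rewrite map_cat (gprod_cat _ _ hG) hl3 /=.
  by case: hG => _ _ -> _ _.
Qed.

End Helpers.
Import Helpers.

Theorem lemma3p4
  (R' : realFieldType) (K : R')
  (G : Type) (mul : G -> G -> G) (one : G) (inv : G -> G)
  (S : finType) (ev : S -> G) (R : seq (seq S)) (n : nat)
  (H : 'I_n -> G -> Prop) (Si : 'I_n -> {set S}) :
  is_group mul one inv ->
  (* S is a finite symmetric subset of G *)
  injective ev ->
  (forall s, exists s', ev s' = inv (ev s)) ->
  (* G = < S | R >, relators of length 2 or 3 *)
  all (fun r => size r \in [:: 2; 3]) R ->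
  (forall g, exists l : seq S, gprod mul one (map ev l) = g) ->
  (forall r, r \in R -> gprod mul one (map ev r) = one) ->
  (forall w : seq (S * bool), weval mul one inv ev w = one ->
     exists N, area_le (fun _ => True)
                 (fun r => exists2 r0, r0 \in R & r = posw r0) w N) ->
  (* H_i <= G, S_i \subset S finite symmetric generating set of H_i *)
  (forall i, is_subgroup mul one inv (H i)) ->
  (forall i s, s \in Si i -> exists2 s', s' \in Si i & ev s' = inv (ev s)) ->
  (forall i a, H i a <->
     exists l : seq S, all (fun s => s \in Si i) l /\ gprod mul one (map ev l) = a) ->
  (* linear isoperimetric inequality of factor K for X_infty *)
  Xinf_linear_isoperimetric mul one inv ev R H Si K ->
  forall (i : 'I_n) (s : S) (a : G), H i a -> ev s = a ->
    exists l : seq S, [/\ all (fun t => t \in Si i) l,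
                          gprod mul one (map ev l) = a &
                          ((size l)%:R <= 12%:R * K)%R].
Proof.
move=> hG _ _ _ _ hRone _ hsub hSisym _ hiso i s a Ha hsa.
have hG' := hG; case: hG' => hA h1l h1r hVl hVr.
set w : seq (letter S G n) := [:: LS s; LH i (inv a)].
have hv : List.Forall (valid_letter H) w.
  constructor; first by [].
  constructor; last by constructor.
  by case: (hsub i) => _ _ /(_ a Ha).
have hw1 : weval mul one inv (letter_val ev (n:=n)) (posw w) = one.
  by rewrite /= h1r hsa hVr.
have [N [hN [cs [hcs hF hfree]]]] := hiso w hv hw1.
set B := N.+1.
set phi : G -> int := fun g => Posz (phiw mul one ev (Si i) B g).
set hw : letter S G n -> bool := fun x => match x with LH j _ => j == i | LS _ => false end.
set f := letter_val ev (n:=n).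
set Rel := fun r => Xinf_rel mul one ev R H Si r.
have hF' : List.Forall (fun c => Rel c.1.2) cs.
  by apply: List.Forall_impl hF => c [].
have wLS : forall l : seq S,
    weval mul one inv f (posw [seq LS t | t <- l]) = gprod mul one (map ev l).
  by elim=> [|x l IH] //=; rewrite IH.
have wLH : forall j (l : seq G),
    weval mul one inv f (posw [seq LH j t | t <- l]) = gprod mul one l.
  by move=> j; elim=> [|x l IH] //=; rewrite IH.
have hWone : forall r, Rel r -> weval mul one inv f r = one.
  move=> r [[r0 hr0 ->]|[j [t [ht ->]]]|[j [l [_ _ hl ->]]]].
  - by rewrite wLS hRone.
  - by rewrite /= h1r hVl.
  - by rewrite wLH.
have hE : forall r, Rel r -> forall h : G, endp mul inv f h r = h.
  by move=> r hr h; rewrite (endp_weval _ _ _ hG) hWone // h1r.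
have up : forall g t, t \in Si i -> (phi (mul g (ev t)) <= phi g + 1)%R.
  move=> g t ht; rewrite /phi.
  have := @phiw_up G S mul one inv ev (Si i) B g t hG ht; lia.
have dn : forall g t, t \in Si i -> (phi g <= phi (mul g (ev t)) + 1)%R.
  move=> g t ht; have [t' ht' et'] := hSisym i t ht.
  have := up (mul g (ev t)) t' ht'.
  by rewrite et' -hA hVr h1r.
have hL : forall r, Rel r -> forall h : G,
      (-1 <= Lam mul inv f hw phi h r)%R /\ (Lam mul inv f hw phi h r <= 1)%R.
  move=> r hr h; case: (hr) => [[r0 hr0 ->]|[j [t [ht ->]]]|[j [l [_ _ hl ->]]]].
  - rewrite Lam_noH; first by split.
    by elim: r0 {hr0 hr} => [|x l IH] //=.
  - rewrite /= /stp /=; case: eqP => [ej|_]; last by split.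
    subst j; have [t' ht' et'] := hSisym i t ht.
    rewrite -et'; have := up h t' ht'; have := dn h t' ht'; lia.
  - case: (boolP (j == i)) => hj.
    + rewrite Lam_allH.
        rewrite (endp_weval _ _ _ hG) wLH hl h1r; split; lia.
      by elim: l {hl hr} => [|x l IH] //=; apply/andP; split.
    + rewrite Lam_noH; first by split.
      by elim: l {hl hr} => [|x l IH] //=; apply/andP; split.
have [b1 b2] := conj_bound hG hE hL hF' one.
rewrite -(Lam_freeq _ _ _ _ hG hfree) in b1 b2.
have phi1 : phi one = 0%R.
  rewrite /phi; apply/eqP; rewrite eqz_nat -leqn0; apply: phiw_le => //.
  by exists [::].
move: b1 b2; rewrite /= /stp /= h1l hsa hVr phi1.
move=> b1 b2.
have hpa : (phiw mul one ev (Si i) B a <= N)%N.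
  move: b1 hcs; rewrite eqxx /phi; lia.
have [l [hl1 hl2 hl3]] := phiw_spec (hpa : _ < B).
exists l; split => //.
have hN2 : (N%:R <= K * 2%:R :> R')%R by [].
have hlN : ((size l)%:R <= N%:R :> R')%R by rewrite ler_nat hl1.
have hK : (0 <= K)%R.
  have h0 : (0 <= N%:R :> R')%R by rewrite ler0n.
  have := le_trans h0 hN2; rewrite pmulr_lge0 //.
apply: (le_trans hlN); apply: (le_trans hN2).
rewrite mulrC; apply: ler_wpM2r => //; by rewrite ler_nat.
Qed.
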